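(* In the curved-exam game described in the context, there exists a no-curve pure Nash equilibrium in which every student $i$ plays $y_i^*=\alpha_i$ if and only if $$\bar\alpha:=\frac1n\sum_{i=1}^n\alpha_i\ \ge\ \frac1n\max_{1\le i\le n}\big[(n-1)J_i(\alpha_i,n,m)+\alpha_i\big].$$ Moreover, if $m\in(0,1)$ is fixed and $(\alpha_i)_{i\ge1}$ is any sequence in $(0,1)$, then $\frac1n\max_{1\le i\le n}\big[(n-1)J_i(\alpha_i,n,m)+\alpha_i\big]\to m$ as $n\to\infty$.
   Context: The curved-exam game: fix $n\ge2$, abilities $\alpha_1,\dots,\alpha_n\in(0,1)$, target mean $m\in(0,1)$. Student $i$ chooses $x_i\in[0,1]$; $\bar x=\frac1n\sum_j x_j$, $\bar x_{-i}=\frac1{n-1}\sum_{j\ne i}x_j$. Grade $G_i(x)=x_i+\max(m-\bar x,0)$ (not truncated at 1); payoff $U_i(x)=G_i(x)^{\alpha_i}(1-x_i)^{1-\alpha_i}$. A no-curve equilibrium is a pure Nash equilibrium with $\bar x\ge m$. For each $i$, $J_i=J_i(\alpha_i,n,m)$ denotes the unique zero in $\big[\frac{nm-\alpha_i}{n-1},\frac{nm}{n-1}-\frac{\alpha_i}{n-\alpha_i}\big]$ of the strictly decreasing function $\phi_i(z)=\big(m+\frac{n-1}{n}(1-z)\big)^{\alpha_i}\big(1+\frac{nm}{n-1}-z\big)^{1-\alpha_i}-1$. *)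

(* Defs.v *)
From HB Require Import structures.
From mathcomp Require Import all_boot all_order all_algebra.
From mathcomp Require Import all_classical all_reals all_analysis.
Set Implicit Arguments. Unset Strict Implicit. Unset Printing Implicit Defensive.
Import Order.TTheory GRing.Theory Num.Theory.
Import numFieldNormedType.Exports.
Local Open Scope classical_set_scope.
Local Open Scope ring_scope.

Section CurvedExam.
Variable R : realType.

(* Students are indexed 0, ..., n-1; a profile/abilities are nat -> R,
   only the first n entries matter. *)

Definition xbar (n : nat) (x : nat -> R) : R := (\sum_(j < n) x j) / n%:R.

(* grade G_i(x) = x_i + max(m - xbar, 0) (not truncated at 1) *)
Definition grade (n : nat) (m : R) (x : nat -> R) (i : nat) : R :=
  x i + Num.max (m - xbar n x) 0.

Definition payoff (n : nat) (m : R) (alpha : nat -> R) (x : nat -> R) (i : nat) : R :=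
  (grade n m x i) `^ (alpha i) * (1 - x i) `^ (1 - alpha i).

Definition deviate (x : nat -> R) (i : nat) (y : R) : nat -> R :=
  fun j => if j == i then y else x j.

Definition is_pure_NE (n : nat) (m : R) (alpha x : nat -> R) : Prop :=
  (forall i, (i < n)%N -> 0 <= x i <= 1) /\
  (forall i, (i < n)%N -> forall y : R, 0 <= y <= 1 ->
      payoff n m alpha (deviate x i y) i <= payoff n m alpha x i).

Definition is_no_curve_NE (n : nat) (m : R) (alpha x : nat -> R) : Prop :=
  is_pure_NE n m alpha x /\ m <= xbar n x.

Definition phi (a : R) (n : nat) (m z : R) : R :=
  (m + (n%:R - 1) / n%:R * (1 - z)) `^ a *
  (1 + n%:R * m / (n%:R - 1) - z) `^ (1 - a) - 1.

Definition J_lo (a : R) (n : nat) (m : R) : R := (n%:R * m - a) / (n%:R - 1).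
Definition J_hi (a : R) (n : nat) (m : R) : R :=
  n%:R * m / (n%:R - 1) - a / (n%:R - a).

(* J(a, n, m): the (unique, by the paper) zero of phi in [J_lo, J_hi] *)
Definition J (a : R) (n : nat) (m : R) : R :=
  xget 0 [set z : R | J_lo a n m <= z <= J_hi a n m /\ phi a n m z = 0].

Definition threshold (n : nat) (m : R) (alpha : nat -> R) : R :=
  (\big[Num.max/((n%:R - 1) * J (alpha 0%N) n m + alpha 0%N)]_(i < n)
      ((n%:R - 1) * J (alpha i) n m + alpha i)) / n%:R.

End CurvedExam.

(* Main.v *)
Require Import Defs.
From HB Require Import structures.
From mathcomp Require Import all_boot all_order all_algebra.
From mathcomp Require Import all_classical all_reals all_analysis.
From mathcomp Require Import ring lra.
Import Order.TTheory GRing.Theory Num.Theory.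
Import numFieldNormedType.Exports.
Local Open Scope classical_set_scope.
Local Open Scope ring_scope.

Ltac fld := field; repeat (apply/andP; split); apply/eqP => hh; lra.

Section Aux.
Variable R : realType.

Lemma amgm (a p q : R) : 0 < a < 1 -> 0 <= p -> 0 <= q ->
  p `^ a * q `^ (1 - a) <= a * p + (1 - a) * q.
Proof.
move=> /andP[a0 a1] p0 q0.
have a'0 : 0 < 1 - a by rewrite subr_gt0.
have := @conjugate_powR R _ _ a^-1 (1 - a)^-1 (powR_ge0 p a) (powR_ge0 q (1-a))
  (ltac:(by rewrite invr_gt0)) (ltac:(by rewrite invr_gt0)).
rewrite !invrK -!powRrM !mulfV ?gt_eqF // !powRr1 // => H.
rewrite [a * p]mulrC [(1 - a) * q]mulrC; apply: H.
by rewrite addrC subrK.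
Qed.

Lemma powR1x (x : R) : 1 `^ x = 1.
Proof. by rewrite powR1. Qed.

Lemma phi_eq (a : R) (n : nat) (m z : R) : 0 < a < 1 -> (2 <= n)%N ->
  0 < 1 + n%:R * m / (n%:R - 1) - z ->
  phi a n m z = ((n%:R - 1) / n%:R) `^ a * (1 + n%:R * m / (n%:R - 1) - z) - 1.
Proof.
move=> /andP[a0 a1] n2 hw.
have N2 : (2 : R) <= n%:R by rewrite (ler_nat R 2 n).
have N1 : n%:R - 1 != 0 :> R by apply/eqP => h; lra.
have N0 : n%:R != 0 :> R by apply/eqP => h; lra.
rewrite /phi.
have -> : m + (n%:R - 1) / n%:R * (1 - z) =
   ((n%:R - 1) / n%:R) * (1 + n%:R * m / (n%:R - 1) - z).
  by field; apply/andP.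
have b0 : 0 <= (n%:R - 1) / n%:R :> R by apply: divr_ge0; lra.
rewrite powRM //; last by lra.
have e1 : a + (1 - a) = 1 by ring.
rewrite -mulrA -powRD; last by rewrite e1 oner_eq0.
by rewrite e1 powRr1 //; lra.
Qed.


Lemma beta_bounds (a : R) (n : nat) : 0 < a < 1 -> (2 <= n)%N ->
  let b := ((n%:R - 1) / n%:R) `^ a in
  0 < b /\ b * n%:R <= n%:R - a /\ b^-1 * (n%:R - 1) <= n%:R - 1 + a.
Proof.
move=> /andP[a0 a1] n2 b.
have N2 : (2 : R) <= n%:R by rewrite (ler_nat R 2 n).
have N1 : n%:R - 1 != 0 :> R by apply/eqP => h; lra.
have N0 : n%:R != 0 :> R by apply/eqP => h; lra.
have c0 : 0 < (n%:R - 1) / n%:R :> R by apply: divr_gt0; lra.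
have b0 : 0 < b by apply: powR_gt0.
split => //; split.
  have := @amgm a ((n%:R - 1) / n%:R) 1 (ltac:(by apply/andP)) (ltW c0) ler01.
  rewrite powR1x mulr1 => h.
  have e : (a * ((n%:R - 1) / n%:R) + (1 - a) * 1) * n%:R = n%:R - a by field.
  rewrite -e ler_pM2r //; lra.
have ci0 : 0 <= ((n%:R - 1) / n%:R)^-1 :> R by rewrite invr_ge0 ltW.
have := @amgm a (((n%:R - 1) / n%:R)^-1) 1 (ltac:(by apply/andP)) ci0 ler01.
rewrite powR1x mulr1 => h.
have hb : (((n%:R - 1) / n%:R)^-1) `^ a * b = 1.
  rewrite /b -powRM //; last exact: ltW.
  rewrite mulVf; first by rewrite powR1x.
  by rewrite gt_eqF.
have -> : b^-1 = (((n%:R - 1) / n%:R)^-1) `^ a.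
  by apply: (@mulIf _ b); [rewrite gt_eqF | rewrite hb mulVf ?gt_eqF].
have e : (a * ((n%:R - 1) / n%:R)^-1 + (1 - a) * 1) * (n%:R - 1) = n%:R - 1 + a.
  by field; apply/andP.
rewrite -e ler_pM2r //; lra.
Qed.

Lemma J_val (a : R) (n : nat) (m : R) : 0 < a < 1 -> (2 <= n)%N ->
  J a n m = n%:R * m / (n%:R - 1) + 1 - (((n%:R - 1) / n%:R) `^ a)^-1.
Proof.
move=> ha n2.
have [b0 [hb1 hb2]] := @beta_bounds a n ha n2.
move: hb1 hb2 b0 (fun z => @phi_eq a n m z ha n2).
set b := ((n%:R - 1) / n%:R) `^ a => hb1 hb2 b0 hphi.
move: ha => /andP[a0 a1].
have N2 : (2 : R) <= n%:R by rewrite (ler_nat R 2 n).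
have N1 : n%:R - 1 != 0 :> R by apply/eqP => h; lra.
have N0 : n%:R != 0 :> R by apply/eqP => h; lra.
have Na : n%:R - a != 0 :> R by apply/eqP => h; lra.
have g0 : 0 < b^-1 by rewrite invr_gt0.
have hgb : b^-1 * b = 1 by rewrite mulVf ?gt_eqF.
have hg2 : n%:R <= b^-1 * (n%:R - a).
  have : 0 <= b^-1 * (n%:R - a - b * n%:R) by apply: mulr_ge0; lra.
  have -> : b^-1 * (n%:R - a - b * n%:R) = b^-1 * (n%:R - a) - (b^-1 * b) * n%:R by ring.
  rewrite hgb; lra.
rewrite /J; apply: xget_unique.
  split; last first.
    rewrite hphi.
      have -> : 1 + n%:R * m / (n%:R - 1) - (n%:R * m / (n%:R - 1) + 1 - b^-1) = b^-1 by ring.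
      by rewrite mulfV ?gt_eqF // subrr.
    have -> : 1 + n%:R * m / (n%:R - 1) - (n%:R * m / (n%:R - 1) + 1 - b^-1) = b^-1 by ring.
    done.
  apply/andP; split; rewrite /J_lo /J_hi -subr_ge0.
    have -> : n%:R * m / (n%:R - 1) + 1 - b^-1 - (n%:R * m - a) / (n%:R - 1)
       = (n%:R - 1 + a - b^-1 * (n%:R - 1)) / (n%:R - 1) by field; rewrite ?N1 ?N0 ?Na ?(gt_eqF b0).
    apply: divr_ge0; lra.
  have -> : n%:R * m / (n%:R - 1) - a / (n%:R - a) - (n%:R * m / (n%:R - 1) + 1 - b^-1)
       = (b^-1 * (n%:R - a) - n%:R) / (n%:R - a) by field; rewrite ?N1 ?N0 ?Na ?(gt_eqF b0).
  apply: divr_ge0; lra.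
move=> y [/andP[_ hy] hy0].
have hw : a / (n%:R - a) <= n%:R * m / (n%:R - 1) - y.
  by move: hy; rewrite /J_hi; lra.
have hw0 : 0 <= a / (n%:R - a) by apply: divr_ge0; lra.
move: hy0; rewrite hphi; last by lra.
move=> h.
have h2 : b * (1 + n%:R * m / (n%:R - 1) - y) = 1 by lra.
have : b^-1 * (b * (1 + n%:R * m / (n%:R - 1) - y)) = b^-1 by rewrite h2 mulr1.
rewrite mulrA hgb mul1r; lra.
Qed.


Lemma sum_dev (n : nat) (x : nat -> R) (i : nat) (y : R) : (i < n)%N ->
  \sum_(j < n) deviate x i y j = \sum_(j < n) x j - x i + y.
Proof.
move=> hi.
rewrite (bigD1 (Ordinal hi)) //= [in RHS](bigD1 (Ordinal hi)) //=.
rewrite /deviate eqxx.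
rewrite (eq_bigr (fun j : 'I_n => x j)); first by ring.
move=> j hj; case: eqP => // e; exfalso; move/eqP: hj; apply; exact: val_inj.
Qed.

Lemma key_le (a c u y : R) : 0 < a < 1 -> 0 < c -> 0 <= u -> 0 <= y <= 1 ->
  (c * u) `^ a * (1 - y) `^ (1 - a) <=
  a `^ a * (1 - a) `^ (1 - a) * c `^ a * (u + (1 - y)).
Proof.
move=> /andP[a0 a1] c0 u0 /andP[y0 y1].
have a'0 : 0 < 1 - a by lra.
have ua : 0 <= u / a by apply: divr_ge0; lra.
have ya : 0 <= (1 - y) / (1 - a) by apply: divr_ge0; lra.
have E1 : (c * u) `^ a = a `^ a * c `^ a * (u / a) `^ a.
  rewrite -powRM; [|lra|lra]; rewrite -powRM //; last by apply: mulr_ge0; lra.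
  by congr (_ `^ _); field; rewrite gt_eqF.
have E2 : (1 - y) `^ (1 - a) = (1 - a) `^ (1 - a) * ((1 - y) / (1 - a)) `^ (1 - a).
  rewrite -powRM //; last lra.
  by congr (_ `^ _); field; rewrite gt_eqF.
rewrite E1 E2.
have := @amgm a (u / a) ((1 - y) / (1 - a)) (ltac:(by apply/andP)) ua ya.
have -> : a * (u / a) + (1 - a) * ((1 - y) / (1 - a)) = u + (1 - y) by field; rewrite !gt_eqF.
move=> h.
have V0 : 0 <= a `^ a * (1 - a) `^ (1 - a) * c `^ a by rewrite !mulr_ge0 ?powR_ge0.
apply: le_trans (ler_wpM2l V0 h); rewrite le_eqVlt; apply/orP; left; apply/eqP; ring.
Qed.

Lemma key_eq (a c s : R) : 0 < a < 1 -> 0 < c -> 0 < s ->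
  (c * (a * s)) `^ a * ((1 - a) * s) `^ (1 - a) =
  a `^ a * (1 - a) `^ (1 - a) * c `^ a * s.
Proof.
move=> /andP[a0 a1] c0 s0.
rewrite !powRM; try lra; last by apply: mulr_ge0; lra.
have e1 : a + (1 - a) = 1 by ring.
have : s `^ a * s `^ (1 - a) = s.
  by rewrite -powRD ?e1 ?oner_eq0 // powRr1 //; lra.
move=> h; rewrite -[in RHS]h; ring.
Qed.


Lemma player_upper (a m T : R) (n : nat) (y : R) : 0 < a < 1 -> (2 <= n)%N ->
  (n%:R - 1) * J a n m <= T -> 0 <= y <= 1 ->
  (y + Num.max (m - (T + y) / n%:R) 0) `^ a * (1 - y) `^ (1 - a) <=
  a `^ a * (1 - a) `^ (1 - a).
Proof.
move=> ha n2 hJ hy; move: (hy) => /andP[y0 y1].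
have [b0 [hb1 hb2]] := @beta_bounds a n ha n2.
move: hJ; rewrite (@J_val a n m ha n2).
move: hb1 hb2 b0.
set b := ((n%:R - 1) / n%:R) `^ a => hb1 hb2 b0 hJ.
move: (ha) => /andP[a0 a1].
have N2 : (2 : R) <= n%:R by rewrite (ler_nat R 2 n).
have N1 : n%:R - 1 != 0 :> R by apply/eqP => h; lra.
have N0 : n%:R != 0 :> R by apply/eqP => h; lra.
have c0 : 0 < (n%:R - 1) / n%:R :> R by apply: divr_gt0; lra.
have g0 : 0 < b^-1 by rewrite invr_gt0.
have hgb : b^-1 * b = 1 by rewrite mulVf ?gt_eqF.
have [w hw] : exists w, w * (n%:R - 1) = n%:R * m - T.
  by exists ((n%:R * m - T) / (n%:R - 1)); fld.
have hT : T = n%:R * m - w * (n%:R - 1) by lra.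
subst T.
have e : (n%:R - 1) * (n%:R * m / (n%:R - 1) + 1 - b^-1) =
   n%:R * m + (n%:R - 1) * (1 - b^-1) by fld.
rewrite e in hJ.
have hw1 : 1 + w <= b^-1.
  have : (n%:R - 1) * (1 + w - b^-1) <= 0 by lra.
  rewrite pmulr_rle0; lra.
have hbw : b * (1 + w) <= 1.
  have : b * (1 + w) <= b * b^-1 by rewrite ler_pM2l.
  by rewrite mulfV ?gt_eqF.
have V0 : 0 <= a `^ a * (1 - a) `^ (1 - a) by rewrite mulr_ge0 ?powR_ge0.
have [h|h] := lerP (m - (n%:R * m - w * (n%:R - 1) + y) / n%:R) 0.
  rewrite addr0.
  have := @key_le a 1 y y ha ltr01 y0 hy.
  rewrite mul1r powR1x mulr1.
  have -> : y + (1 - y) = 1 by ring.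
  by rewrite mulr1.
have e2 : y + (m - (n%:R * m - w * (n%:R - 1) + y) / n%:R) =
   ((n%:R - 1) / n%:R) * (w + y) by fld.
rewrite e2.
have wy : 0 <= w + y.
  have : 0 < (n%:R - 1) / n%:R * (w + y) by rewrite -e2; lra.
  by rewrite pmulr_rgt0 // => /ltW.
apply: le_trans (@key_le a ((n%:R - 1) / n%:R) (w + y) y ha c0 wy hy) _.
rewrite -/b.
have -> : w + y + (1 - y) = 1 + w by ring.
rewrite -mulrA; exact: ler_piMr.
Qed.

Lemma player_lower (a m T : R) (n : nat) : 0 < a < 1 -> (2 <= n)%N ->
  n%:R * m <= T + a -> T < (n%:R - 1) * J a n m ->
  exists y, 0 <= y <= 1 /\
  a `^ a * (1 - a) `^ (1 - a) <
  (y + Num.max (m - (T + y) / n%:R) 0) `^ a * (1 - y) `^ (1 - a).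
Proof.
move=> ha n2 hTa hJ.
have [b0 [hb1 hb2]] := @beta_bounds a n ha n2.
move: hJ; rewrite (@J_val a n m ha n2).
move: hb1 hb2 b0.
set b := ((n%:R - 1) / n%:R) `^ a => hb1 hb2 b0 hJ.
move: (ha) => /andP[a0 a1].
have N2 : (2 : R) <= n%:R by rewrite (ler_nat R 2 n).
have N1 : n%:R - 1 != 0 :> R by apply/eqP => h; lra.
have N0 : n%:R != 0 :> R by apply/eqP => h; lra.
have c0 : 0 < (n%:R - 1) / n%:R :> R by apply: divr_gt0; lra.
have g0 : 0 < b^-1 by rewrite invr_gt0.
have hgb : b^-1 * b = 1 by rewrite mulVf ?gt_eqF.
have hg2 : n%:R <= b^-1 * (n%:R - a).
  have : 0 <= b^-1 * (n%:R - a - b * n%:R) by apply: mulr_ge0; lra.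
  have -> : b^-1 * (n%:R - a - b * n%:R) = b^-1 * (n%:R - a) - (b^-1 * b) * n%:R by ring.
  rewrite hgb; lra.
have [w hw] : exists w, w * (n%:R - 1) = n%:R * m - T.
  by exists ((n%:R * m - T) / (n%:R - 1)); fld.
have hT : T = n%:R * m - w * (n%:R - 1) by lra.
subst T.
have e : (n%:R - 1) * (n%:R * m / (n%:R - 1) + 1 - b^-1) =
   n%:R * m + (n%:R - 1) * (1 - b^-1) by fld.
rewrite e in hJ.
have hw1 : b^-1 < 1 + w.
  have : 0 < (n%:R - 1) * (1 + w - b^-1) by lra.
  rewrite pmulr_rgt0; lra.
have hbw : 1 < b * (1 + w).
  have : b * b^-1 < b * (1 + w) by rewrite ltr_pM2l.
  by rewrite mulfV ?gt_eqF.
have hwa : a < w * (n%:R - a).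
  have : b^-1 * (n%:R - a) < (1 + w) * (n%:R - a) by rewrite ltr_pM2r //; lra.
  lra.
have w0 : 0 < w.
  have : 0 < w * (n%:R - a) by lra.
  rewrite pmulr_lgt0 //; lra.
have hw2 : w * (n%:R - 1) <= a by lra.
have hw3 : (1 - a) * w <= w * (n%:R - 1).
  rewrite mulrC ler_pM2l //; lra.
exists (a - (1 - a) * w); split.
  apply/andP; split; first lra.
  have : 0 <= (1 - a) * w by apply: mulr_ge0; lra.
  lra.
have hc : 0 < m - (n%:R * m - w * (n%:R - 1) + (a - (1 - a) * w)) / n%:R.
  have -> : m - (n%:R * m - w * (n%:R - 1) + (a - (1 - a) * w)) / n%:R =
     (w * (n%:R - a) - a) / n%:R by fld.
  apply: divr_gt0; lra.
rewrite max_l ?ltW //.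
have -> : a - (1 - a) * w + (m - (n%:R * m - w * (n%:R - 1) + (a - (1 - a) * w)) / n%:R)
   = ((n%:R - 1) / n%:R) * (a * (1 + w)) by fld.
have -> : 1 - (a - (1 - a) * w) = (1 - a) * (1 + w) by ring.
rewrite key_eq //; last lra.
rewrite -/b -mulrA.
have V0 : 0 < a `^ a * (1 - a) `^ (1 - a) by rewrite mulr_gt0 ?powR_gt0 //; lra.
by rewrite ltr_pMr.
Qed.

Lemma player_at (a m T : R) (n : nat) : 0 < a < 1 -> (2 <= n)%N ->
  n%:R * m <= T + a ->
  (a + Num.max (m - (T + a) / n%:R) 0) `^ a * (1 - a) `^ (1 - a) =
  a `^ a * (1 - a) `^ (1 - a).
Proof.
move=> /andP[a0 a1] n2 h.
have N2 : (2 : R) <= n%:R by rewrite (ler_nat R 2 n).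
have N0 : n%:R != 0 :> R by apply/eqP => h'; lra.
rewrite max_r ?addr0 //.
have -> : m - (T + a) / n%:R = (n%:R * m - T - a) / n%:R by fld.
apply: mulr_le0_ge0; first lra.
rewrite invr_ge0; lra.
Qed.


Lemma J_bounds (a m : R) (n : nat) : 0 < a < 1 -> (2 <= n)%N ->
  n%:R * m <= (n%:R - 1) * J a n m + a /\
  (n%:R - 1) * J a n m + a <= n%:R * m + 2^-1.
Proof.
move=> ha n2.
have [b0 [hb1 hb2]] := @beta_bounds a n ha n2.
rewrite (@J_val a n m ha n2).
move: hb1 hb2 b0.
set b := ((n%:R - 1) / n%:R) `^ a => hb1 hb2 b0.
move: (ha) => /andP[a0 a1].
have N2 : (2 : R) <= n%:R by rewrite (ler_nat R 2 n).
have N1 : n%:R - 1 != 0 :> R by apply/eqP => h; lra.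
have N0 : n%:R != 0 :> R by apply/eqP => h; lra.
have g0 : 0 < b^-1 by rewrite invr_gt0.
have hgb : b^-1 * b = 1 by rewrite mulVf ?gt_eqF.
have hg2 : n%:R <= b^-1 * (n%:R - a).
  have : 0 <= b^-1 * (n%:R - a - b * n%:R) by apply: mulr_ge0; lra.
  have -> : b^-1 * (n%:R - a - b * n%:R) = b^-1 * (n%:R - a) - (b^-1 * b) * n%:R by ring.
  rewrite hgb; lra.
have e : (n%:R - 1) * (n%:R * m / (n%:R - 1) + 1 - b^-1) =
   n%:R * m + (n%:R - 1) * (1 - b^-1) by fld.
rewrite e; split; first lra.
have H1 : 0 <= (n%:R - 1) * (b^-1 * (n%:R - a) - n%:R) by apply: mulr_ge0; lra.
have H2 : 0 <= (a - 2^-1) ^+ 2 by apply: sqr_ge0.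
suff : ((n%:R - 1) * (1 - b^-1) + a) * (n%:R - a) <= 2^-1 * (n%:R - a).
  rewrite ler_pM2r; lra.
nra.
Qed.

End Aux.

Theorem mainTheorem11 (R : realType) :
  (forall (n : nat) (m : R) (alpha : nat -> R),
     (2 <= n)%N -> 0 < m < 1 -> (forall i, (i < n)%N -> 0 < alpha i < 1) ->
     (is_no_curve_NE n m alpha alpha <->
        threshold n m alpha <= xbar n alpha)) /\
  (forall (m : R) (alpha : nat -> R),
     0 < m < 1 -> (forall i, 0 < alpha i < 1) ->
     (fun n : nat => threshold n m alpha) @ \oo --> m).
Proof.
split.
  move=> n m alpha n2 hm ha.
  have N2 : (2 : R) <= n%:R by rewrite (ler_nat R 2 n).
  have N0 : (0 : R) < n%:R by lra.
  set S := \sum_(j < n) alpha j.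
  have hpay : forall i y, (i < n)%N -> payoff n m alpha (deviate alpha i y) i =
    (y + Num.max (m - ((S - alpha i) + y) / n%:R) 0) `^ (alpha i) * (1 - y) `^ (1 - alpha i).
    by move=> i y hi; rewrite /payoff /grade /xbar sum_dev // /deviate eqxx.
  have hpay0 : forall i, (i < n)%N -> n%:R * m <= S ->
    payoff n m alpha alpha i = alpha i `^ alpha i * (1 - alpha i) `^ (1 - alpha i).
    move=> i hi hS; rewrite /payoff /grade /xbar -/S.
    have := @player_at R (alpha i) m (S - alpha i) n (ha i hi) n2.
    by rewrite subrK => ->.
  have hthr : (threshold n m alpha <= xbar n alpha) =
    (\big[Num.max/((n%:R - 1) * J (alpha 0%N) n m + alpha 0%N)]_(i < n)
      ((n%:R - 1) * J (alpha i) n m + alpha i) <= S).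
    by rewrite /threshold /xbar -/S ler_pM2r ?invr_gt0.
  rewrite hthr; split.
    move=> [[hr hne] hmx].
    have hNm : n%:R * m <= S.
      by move: hmx; rewrite /xbar -/S ler_pdivlMr // mulrC.
    have hF : forall i, (i < n)%N -> (n%:R - 1) * J (alpha i) n m + alpha i <= S.
      move=> i hi; rewrite leNgt; apply/negP => hlt.
      have [y [hy hV]] := @player_lower R (alpha i) m (S - alpha i) n (ha i hi) n2
        (ltac:(by rewrite subrK)) (ltac:(lra)).
      have := hne i hi y hy.
      rewrite hpay // hpay0 //; lra.
    apply/bigmax_leP; split; first by apply: hF; exact: (ltn_trans (ltn0Sn 0) n2).
    by move=> i _; apply: hF.
  move/bigmax_leP => [_ hF'].
  have hF : forall i, (i < n)%N -> (n%:R - 1) * J (alpha i) n m + alpha i <= S.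
    by move=> i hi; exact: (hF' (Ordinal hi)).
  have hNm : n%:R * m <= S.
    have [h _] := @J_bounds R (alpha 0%N) m n (ha 0%N (ltn_trans (ltn0Sn 0) n2)) n2.
    apply: le_trans h _; apply: hF; exact: (ltn_trans (ltn0Sn 0) n2).
  split; last by rewrite /xbar -/S ler_pdivlMr // mulrC.
  split.
    by move=> i hi; move: (ha i hi) => /andP[h1 h2]; apply/andP; split; lra.
  move=> i hi y hy.
  rewrite hpay // hpay0 //.
  apply: (@player_upper R (alpha i) m (S - alpha i) n y (ha i hi) n2) => //.
  have := hF i hi; lra.
move=> m alpha hm ha.
apply: (@squeeze_cvgr _ _ _ _ (fun=> m) (fun n => m + harmonic n)).
- near=> n.
  have n2 : (2 <= n)%N by near: n; exists 2%N.
  have N2 : (2 : R) <= n%:R by rewrite (ler_nat R 2 n).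
  have N0 : (0 : R) < n%:R by lra.
  have hb := fun i => @J_bounds R (alpha i) m n (ha i) n2.
  rewrite /threshold; apply/andP; split.
    rewrite ler_pdivlMr // mulrC.
    apply: le_trans (proj1 (hb 0%N)) _.
    exact: (@le_bigmax _ _ _ _ (fun i : 'I_n => (n%:R - 1) * J (alpha i) n m + alpha i) (Ordinal (ltn_trans (ltn0Sn 0) n2))).
  have hbig : \big[Num.max/((n%:R - 1) * J (alpha 0%N) n m + alpha 0%N)]_(i < n)
      ((n%:R - 1) * J (alpha i) n m + alpha i) <= n%:R * m + 2^-1.
    by apply: bigmax_le; [exact: (proj2 (hb 0%N)) | move=> i _; exact: (proj2 (hb i))].
  rewrite ler_pdivrMr //.
  apply: le_trans hbig _.
  rewrite /harmonic /=.
  have h0 : 0 < (n.+1%:R : R)^-1 by rewrite invr_gt0.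
  have hh : (n.+1%:R : R)^-1 * (n%:R + 1) = 1 by rewrite -natr1 mulVf // natr1 pnatr_eq0.
  have h2 : 0 <= (n.+1%:R : R)^-1 * (n%:R - 2).
    by apply: mulr_ge0; [exact: ltW | lra].
  move: h0 hh h2; set h := (n.+1%:R : R)^-1 => h0 hh h2.
  nra.
- exact: cvg_cst.
- rewrite -[X in _ --> X]addr0; apply: cvgD; [exact: cvg_cst | exact: cvg_harmonic].
Unshelve. all: by end_near.
Qed.
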